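(* (Perfect completeness of the Meadows protocol.) Let a Meadows puzzle on an $n\times n$ grid be given. If the prover $P$ knows a solution of the puzzle and follows the Meadows zero-knowledge protocol described in the context, then the verifier $V$ always accepts.
   Context: Meadows puzzle: an $n\times n$ grid in which some cells $c_1,\dots,c_k$ contain a dot. A solution is a partition of the grid into squares (axis-aligned $s\times s$ blocks of cells) such that each square contains exactly one dotted cell. Cards: each card has either an integer or nothing (a blank card) on its front; all backs are indistinguishable. A pile-shifting shuffle applied to a matrix of face-down cards (entries may be equal-size stacks per row) cyclically shifts its columns by a uniformly random amount unknown to everyone. Chosen cut protocol: given face-down cards (or equal-size stacks) $c'_1,\dots,c'_q$ and a secret index $i$ chosen by $P$, $P$ forms a $3\times q$ matrix with row 1 equal to $c'_1,\dots,c'_q$, row 2 a face-down card $1$ in column $i$ and $0$ elsewhere, row 3 a card $1$ in column 1 and $0$ elsewhere (turned face-down); a pile-shifting shuffle is applied; row 2 is revealed and the card of row 1 above the $1$ is $c'_i$; after use it is put back, face-up cards are turned down, another pile-shifting shuffle is applied, row 3 is revealed and the columns are shifted cyclically so its $1$ returns to column 1. Printing protocol: given a face-down $p\times q$ template and a $p\times q$ area, each template card is placed on the corresponding area card; for each two-card stack, $P$ uses the chosen cut protocol to select a card, it is revealed, $V$ rejects unless it is blank, and it is removed. Meadows protocol: $P$ publicly puts a blank card on every cell, appends $n-1$ rows and $n-1$ columns of blank dummy cards below and to the right, and turns all cards face-down, giving a $(2n-1)\times(2n-1)$ matrix (read row by row as a sequence). $P$ builds $n$ templates, one for each $s=1,\dots,n$: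 an $n\times n$ matrix whose top-left $s\times s$ block consists of cards $1$ and whose other cards are blank; $V$ checks them. Let $B_1,\dots,B_k$ be the squares of $P$'s solution with $c_i\in B_i$. For $i=1,\dots,k$: (1) via the chosen cut protocol $P$ selects the top-left card of the $n\times n$ area whose top-left corner is that of $B_i$; (2) via the chosen cut protocol $P$ selects the template of $B_i$'s size; (3) the printing protocol is applied; (4) all cards on dotted cells are revealed and $V$ rejects unless those on $c_1,\dots,c_i$ are $1$ and those on $c_{i+1},\dots,c_k$ are blank (they are then turned face-down again); (5) $P$ reconstructs the used template, returns it to the pile, and $V$ checks all $n$ templates (rejecting otherwise). Finally $P$ reveals all grid cards and $V$ rejects unless all are $1$; $P$ reveals all dummy cards and $V$ rejects unless all are blank. Otherwise $V$ accepts. *)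

(* Defs.v *)
From mathcomp Require Import all_boot.

Set Implicit Arguments.
Unset Strict Implicit.
Unset Printing Implicit Defensive.

Definition card := option nat.
Definition blank : card := None.
Definition num (k : nat) : card := Some k.

(* Puzzle, squares, solutions.  Cells are (row, column) with 0-based
   coordinates; a square is (x, y, s): top-left cell (x, y), side s.   *)
Definition cell := (nat * nat)%type.
Definition square := (nat * nat * nat)%type.

Definition sq_row (B : square) : nat := B.1.1.
Definition sq_col (B : square) : nat := B.1.2.
Definition sq_size (B : square) : nat := B.2.

Definition in_square (c : cell) (B : square) : bool :=
  (sq_row B <= c.1 < sq_row B + sq_size B) &&
  (sq_col B <= c.2 < sq_col B + sq_size B).

Definition meadows_puzzle (n : nat) (dots : seq cell) : Prop :=
  uniq dots /\ all (fun c : cell => (c.1 < n) && (c.2 < n)) dots.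

Definition is_solution (n : nat) (dots : seq cell) (sol : seq square) : Prop :=
  [/\ all (fun B => (0 < sq_size B) && (sq_row B + sq_size B <= n)
                    && (sq_col B + sq_size B <= n)) sol,
      (forall r c, r < n -> c < n -> count (in_square (r, c)) sol = 1)
    & all (fun B => count (fun d => in_square d B) dots == 1) sol].

(* Pile-shifting shuffle on a matrix given as its sequence of columns:
   cyclic shift of the columns by r (r is taken modulo the number of
   columns, so every r : nat denotes one of the possible outcomes). *)
Definition pshift (A : Type) (r : nat) (m : seq A) : seq A :=
  rot (r %% size m) m.

(* Chosen cut protocol.  The 3 x q matrix is stored as a sequence of q
   columns (row1 pile, row2 card, row3 card). *)
Definition marker (q i : nat) : seq card :=
  [seq (if j == i then num 1 else num 0) | j <- iota 0 q].

Definition cc_matrix (T : Type) (cs : seq T) (i : nat) : seq (T * card * card) :=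
  zip (zip cs (marker (size cs) i)) (marker (size cs) 0).

Definition row1 (T : Type) (M : seq (T * card * card)) : seq T :=
  [seq c.1.1 | c <- M].

Definition set_row1 (T : Type) (M : seq (T * card * card)) (r : seq T)
  : seq (T * card * card) :=
  zip (zip r [seq c.1.2 | c <- M]) [seq c.2 | c <- M].

(* First phase: build the matrix, shuffle, reveal row 2; returns the
   shuffled matrix and the revealed column j (row1 at column j = c'_i). *)
Definition cc_open (T : Type) (cs : seq T) (i r1 : nat)
  : seq (T * card * card) * nat :=
  let M := pshift r1 (cc_matrix cs i) in
  (M, find (fun c => c.1.2 == num 1) M).

(* Second phase (after use): put back, shuffle, reveal row 3 and shift
   the columns cyclically so that its 1 returns to column 1. *)
Definition cc_close (T : Type) (M : seq (T * card * card)) (r2 : nat) : seq T :=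
  let M2 := pshift r2 M in
  row1 (rot (find (fun c => c.2 == num 1) M2) M2).

Definition template (n s : nat) : seq card :=
  [seq (if (a < s) && (b < s) then num 1 else blank) | a <- iota 0 n, b <- iota 0 n].

Definition templates (n : nat) : seq (seq card) :=
  [seq template n s | s <- iota 1 n].

(* Printing of one two-card stack (template card t on top of area card g):
   the honest prover selects (chosen cut, shift r) the blank card; it is
   revealed, V rejects unless blank, it is removed, and the other card
   remains on the area position. *)
Definition print_cell (t g : card) (r : nat) : option card :=
  let i := if t == blank then 0 else 1 in
  let (M, j) := cc_open [:: t; g] i r in
  let row := row1 M in
  if nth blank row j == blank then Some (nth blank row (1 - j)) else None.

(* Printing protocol of template tp onto the n x n area of the row-major
   sequence `row` (of the (2n-1) x (2n-1) matrix) whose top-left card is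
   at position j. *)
Definition print (n : nat) (row : seq card) (j : nat) (tp : seq card)
  (rs : nat -> nat -> nat) : option (seq card) :=
  let m := n.*2.-1 in
  foldl (fun acc (ab : nat * nat) =>
           obind (fun row =>
             let p := (j + ab.1 * m + ab.2) %% size row in
             omap (fun c => set_nth blank row p c)
               (print_cell (nth blank tp (ab.1 * n + ab.2)) (nth blank row p)
                  (rs ab.1 ab.2))) acc)
        (Some row) [seq (a, b) | a <- iota 0 n, b <- iota 0 n].

(* The randomness: outcomes of all pile-shifting shuffles.             *)
Record shuffles := Shuffles {
  grid_r1 : nat -> nat;          (* round i, grid chosen cut, 1st shuffle *)
  grid_r2 : nat -> nat;          (* round i, grid chosen cut, 2nd shuffle *)
  tmpl_r1 : nat -> nat;          (* round i, template chosen cut, 1st    *)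
  tmpl_r2 : nat -> nat;          (* round i, template chosen cut, 2nd    *)
  print_r : nat -> nat -> nat -> nat  (* round i, stack (a,b) of printing *)
}.

Definition sol_square (dots : seq cell) (sol : seq square) (i : nat) : square :=
  nth (0, 0, 0) sol (find (in_square (nth (0, 0) dots i)) sol).

(* State: the (2n-1)^2 cards read row by row, and the template pile. *)
Definition mstate := (seq card * seq (seq card))%type.

Definition meadows_round (n : nat) (dots : seq cell) (sol : seq square)
  (rnd : shuffles) (i : nat) (st : mstate) : option mstate :=
  let m := n.*2.-1 in
  let (G, Ts) := st in
  let B := sol_square dots sol i in
  let s := sq_size B in
  (* (1) select top-left card of the n x n area at B's corner *)
  let (MG, jG) := cc_open G (sq_row B * m + sq_col B) (grid_r1 rnd i) in
  (* (2) select the template of B's size *)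
  let (MT, jT) := cc_open Ts s.-1 (tmpl_r1 rnd i) in
  let tp := nth [::] (row1 MT) jT in
  (* (3) printing; then the grid chosen cut is completed *)
  match print n (row1 MG) jG tp (print_r rnd i) with
  | None => None
  | Some rowG =>
    let G' := cc_close (set_row1 MG rowG) (grid_r2 rnd i) in
    (* (4) reveal dotted cells *)
    if all (fun t => nth blank G' (let c := nth (0, 0) dots t in c.1 * m + c.2)
                     == (if t <= i then num 1 else blank))
           (iota 0 (size dots))
    then
      (* (5) reconstruct the template, return it, check all templates *)
      let Ts' := cc_close (set_row1 MT (set_nth [::] (row1 MT) jT (template n s)))
                          (tmpl_r2 rnd i) in
      if Ts' == templates n then Some (G', Ts') else None
    else None
  end.

(* Whole protocol with honest prover knowing solution `sol`; returns
   true iff the verifier accepts. *)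
Definition meadows_protocol (n : nat) (dots : seq cell) (sol : seq square)
  (rnd : shuffles) : bool :=
  let m := n.*2.-1 in
  let G0 := nseq (m * m) blank in
  let T0 := templates n in
  (T0 == templates n) &&            (* V checks the templates *)
  match foldl (fun acc i => obind (meadows_round n dots sol rnd i) acc)
              (Some (G0, T0)) (iota 0 (size dots)) with
  | None => false
  | Some (G, _) =>
      all (fun p => nth blank G p ==
                    (if (p %/ m < n) && (p %% m < n) then num 1 else blank))
          (iota 0 (m * m))
  end.

(* Main.v *)
Require Import Defs.
From mathcomp Require Import all_boot.
From mathcomp Require Import zify.


Lemma mod2N x N : x < N + N -> x %% N = if x < N then x else x - N.
Proof.
case: ifP => h1 h2; first by rewrite modn_small.
have -> : x = (x - N) + N by lia.
rewrite modnDr modn_small; lia.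
Qed.

Lemma nth_rot (T : Type) (x0 : T) k s l : k <= size s -> l < size s ->
  nth x0 (rot k s) l = nth x0 s ((l + k) %% size s).
Proof.
move=> hk hl; rewrite /rot nth_cat size_drop.
case: ifP => h.
  by rewrite nth_drop modn_small ?[k + l]addnC //; lia.
rewrite nth_take; last lia.
rewrite mod2N; last lia.
case: ifP => h2; first lia.
congr nth; lia.
Qed.

Lemma find_unique T (a : pred T) s x0 j : j < size s ->
  (forall l, l < size s -> a (nth x0 s l) = (l == j)) -> find a s = j.
Proof.
move=> hj H.
have Hh : has a s by apply/(has_nthP x0); exists j => //; rewrite H ?eqxx.
have := nth_find x0 Hh; rewrite H -?has_find // => /eqP.
done.
Qed.

Lemma rot_shift_eq N k l p : k <= N -> l < N -> p < N ->
  ((l + k) %% N == (p + k) %% N) = (l == p).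
Proof.
move=> hk hl hp; rewrite !mod2N; try lia.
case: ifP; case: ifP => h1 h2; apply/eqP/eqP; lia.
Qed.

Lemma rot_idx_eq N k l i : k <= N -> l < N -> i < N ->
  ((l + k) %% N == i) = (l == (i + N - k) %% N).
Proof.
move=> hk hl hi; rewrite !mod2N; try lia.
case: ifP; case: ifP => h1 h2; apply/eqP/eqP; lia.
Qed.

Lemma modA N i k off : k <= N -> ((i + N - k) %% N + off + k) %% N = (i + off) %% N.
Proof.
move=> hk; rewrite -addnA modnDml.
have -> : i + N - k + (off + k) = i + off + N by lia.
by rewrite modnDr.
Qed.


Lemma size_marker q i : size (marker q i) = q.
Proof. by rewrite /marker size_map size_iota. Qed.

Lemma nth_marker q i l : l < q -> nth blank (marker q i) l = if l == i then num 1 else num 0.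
Proof. by move=> hl; rewrite /marker (nth_map 0) ?size_iota // nth_iota. Qed.

Lemma find_marker_rot q i k : i < q -> k < q ->
  find (fun c => c == num 1) (rot k (marker q i)) = (i + q - k) %% q.
Proof.
move=> hi hk; apply: (@find_unique _ _ _ blank).
  by rewrite size_rot size_marker ltn_pmod //; lia.
move=> l; rewrite size_rot size_marker => hl.
rewrite nth_rot ?size_marker //; last lia.
rewrite nth_marker ?ltn_pmod //; last lia.
rewrite -rot_idx_eq //; try lia.
by case: ifP.
Qed.

Lemma take_zip (A B : Type) (a : seq A) (b : seq B) k : take k (zip a b) = zip (take k a) (take k b).
Proof. by elim: a k b => [|x a IH] [|k] [|y b] //=; rewrite IH. Qed.

Lemma drop_zip (A B : Type) (a : seq A) (b : seq B) k : drop k (zip a b) = zip (drop k a) (drop k b).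
Proof. by elim: a k b => [|x a IH] [|k] [|y b] //=; rewrite ?zip0s ?IH //; case: drop. Qed.

Lemma zip_rot (A B : Type) (a : seq A) (b : seq B) k : size a = size b ->
  zip (rot k a) (rot k b) = rot k (zip a b).
Proof.
move=> h; rewrite /rot zip_cat ?take_zip ?drop_zip // !size_drop h //.
Qed.

Lemma size_cc_matrix T (cs : seq T) i : size (cc_matrix cs i) = size cs.
Proof. by rewrite /cc_matrix !size_zip !size_marker minnn minnn. Qed.

Lemma row1_cc T (cs : seq T) i : row1 (cc_matrix cs i) = cs.
Proof.
rewrite /row1 /cc_matrix (map_comp fst fst).
change (unzip1 (unzip1 (zip (zip cs (marker (size cs) i)) (marker (size cs) 0))) = cs).
by rewrite !unzip1_zip // ?size_zip ?size_marker ?minnn.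
Qed.

Lemma mark2_cc T (cs : seq T) i : map (fun c => c.1.2) (cc_matrix cs i) = marker (size cs) i.
Proof.
rewrite /cc_matrix (map_comp snd fst).
change (unzip2 (unzip1 (zip (zip cs (marker (size cs) i)) (marker (size cs) 0))) = marker (size cs) i).
by rewrite unzip1_zip ?unzip2_zip // ?size_zip ?size_marker ?minnn.
Qed.

Lemma cc_open_eq T (cs : seq T) i r : i < size cs ->
  cc_open cs i r = (pshift r (cc_matrix cs i), (i + size cs - r %% size cs) %% size cs).
Proof.
move=> hi; rewrite /cc_open; congr pair.
rewrite /pshift size_cc_matrix.
have -> : (fun c : T * Defs.card * Defs.card => c.1.2 == num 1) = preim (fun c => c.1.2) (fun c => c == num 1) by [].
rewrite -find_map map_rot mark2_cc find_marker_rot //.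
by rewrite ltn_pmod //; lia.
Qed.

Lemma row1_pshift T (cs : seq T) i r : row1 (pshift r (cc_matrix cs i)) = rot (r %% size cs) cs.
Proof. by rewrite /pshift /row1 map_rot -/(row1 _) row1_cc size_cc_matrix. Qed.

Lemma cc_close_eq T (cs : seq T) i r r2 row' : size row' = size cs -> 0 < size cs ->
  cc_close (set_row1 (pshift r (cc_matrix cs i)) row') r2 = rotr (r %% size cs) row'.
Proof.
move=> hs hN; set N := size cs; set k := r %% N.
have hk : k < N by rewrite ltn_pmod.
set X := cc_matrix cs i.
have hX : size X = N by rewrite size_cc_matrix.
set Y := rotr k row'.
have hY : size Y = N by rewrite size_rotr.
have -> : row' = rot k Y by rewrite rotrK.
set Z := zip (zip Y [seq c.1.2 | c <- X]) [seq c.2 | c <- X].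
have hZ : size Z = N by rewrite !size_zip !size_map hX hY !minnn.
have E : set_row1 (pshift r X) (rot k Y) = rot k Z.
  rewrite /set_row1 /pshift hX -/k !map_rot zip_rot ?size_map ?hY ?hX //.
  by rewrite zip_rot // size_zip !size_map hX hY minnn.
rewrite E /cc_close /pshift size_rot hZ [rot (r2 %% N) (rot k Z)]rot_rot_add.
have hZ2 : map snd Z = marker N 0.
  change (unzip2 Z = marker N 0).
  rewrite /Z unzip2_zip; last by rewrite size_zip !size_map hX hY minnn.
  change (unzip2 (zip (zip cs (marker N i)) (marker N 0)) = marker N 0).
  by rewrite unzip2_zip // size_zip !size_marker minnn.
have [q [hq ->]] : exists q, q < N /\ rot (rot_add Z k (r2 %% N)) Z = rot q Z.
  have := leq_rot_add k (r2 %% N) Z; rewrite hZ leq_eqVlt => /orP [/eqP h|h].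
    by exists 0; split => //; rewrite h -{1}hZ rot_size rot0.
  by exists (rot_add Z k (r2 %% N)).
have -> : (fun c : T * Defs.card * Defs.card => c.2 == num 1) = preim snd (fun c => c == num 1) by [].
rewrite -find_map map_rot hZ2 find_marker_rot // add0n.
have -> : rot ((N - q) %% N) (rot q Z) = Z.
  case: q hq => [|q] hq; first by rewrite subn0 modnn !rot0.
  rewrite modn_small; last lia.
  by have := rotK q.+1 Z; rewrite /rotr size_rot hZ.
rewrite /Z /row1 (map_comp fst fst).
change (unzip1 (unzip1 (zip (zip Y [seq c.1.2 | c <- X]) [seq c.2 | c <- X])) = Y).
rewrite unzip1_zip ?unzip1_zip //.
  by rewrite size_map hX hY.
by rewrite size_zip !size_map hX hY minnn.
Qed.

Lemma print_cell_eq t g r : print_cell t g r =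
  if (t == blank) || (g == blank) then Some (if t == blank then g else t) else None.
Proof.
rewrite /print_cell /cc_open /pshift /=.
move: (ltn_pmod r (isT : 0 < 2)).
case: t => [t|]; case: g => [g|]; case: (r %% 2) => [|[|]] //=.
Qed.


Lemma nth_allpairs_iota (T : Type) (x0 : T) (f : nat -> nat -> T) st n n' a b :
  a < n -> b < n' ->
  nth x0 [seq f a b | a <- iota st n, b <- iota 0 n'] (a * n' + b) = f (st + a) b.
Proof.
elim: n st a => [|n IH] st a //= ha hb.
rewrite nth_cat size_map size_iota.
case: a ha => [|a] ha.
  by rewrite mul0n add0n hb (nth_map 0) ?size_iota // nth_iota // addn0.
have -> : (a.+1 * n' + b < n') = false by rewrite mulSn; lia.
have -> : a.+1 * n' + b - n' = a * n' + b by rewrite mulSn; lia.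
by rewrite IH // addSnnS.
Qed.

Lemma nth_template n s a b : a < n -> b < n ->
  nth blank (template n s) (a * n + b) = if (a < s) && (b < s) then num 1 else blank.
Proof. by move=> ha hb; rewrite /template nth_allpairs_iota. Qed.

Lemma set_nth_rot (T : Type) (x0 : T) k s p c : k <= size s -> p < size s ->
  set_nth x0 (rot k s) p c = rot k (set_nth x0 s ((p + k) %% size s) c).
Proof.
move=> hk hp.
have hm : (p + k) %% size s < size s by rewrite ltn_pmod //; lia.
apply: (@eq_from_nth _ x0).
  by rewrite size_set_nth !size_rot size_set_nth; lia.
move=> l; rewrite size_set_nth size_rot => hl.
have hl' : l < size s by lia.
have hs : size (set_nth x0 s ((p + k) %% size s) c) = size s by rewrite size_set_nth; lia.
rewrite nth_set_nth /= [in RHS]nth_rot hs //; try lia.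
rewrite nth_set_nth /= rot_shift_eq //.
by case: ifP => // _; rewrite nth_rot.
Qed.

Lemma print_fold n m tp rs j k (L : seq (nat * nat)) (pos : nat * nat -> nat)
  (tt : nat * nat -> bool) (Gc : seq Defs.card) :
  k <= size Gc -> uniq L -> {in L &, injective pos} ->
  (forall ab, ab \in L -> ((j + ab.1 * m + ab.2) %% size Gc + k) %% size Gc = pos ab /\ pos ab < size Gc) ->
  (forall ab, ab \in L -> nth blank tp (ab.1 * n + ab.2) = if tt ab then num 1 else blank) ->
  (forall ab, ab \in L -> tt ab -> nth blank Gc (pos ab) = blank) ->
  foldl (fun acc (ab : nat * nat) =>
           obind (fun row =>
             let p := (j + ab.1 * m + ab.2) %% size row in
             omap (fun c => set_nth blank row p c)
               (print_cell (nth blank tp (ab.1 * n + ab.2)) (nth blank row p)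
                  (rs ab.1 ab.2))) acc)
        (Some (rot k Gc)) L
  = Some (rot k (mkseq (fun q => if has (fun ab => tt ab && (pos ab == q)) L then num 1
                                 else nth blank Gc q) (size Gc))).
Proof.
elim: L Gc => [|ab L IH] Gc hk.
  by move=> *; rewrite /= -{1}(mkseq_nth blank Gc).
rewrite cons_uniq => /andP [abL uL] inj hpos htp hbl /=.
have [hp1 hp2] := hpos ab (mem_head _ _).
have hN : 0 < size Gc by lia.
have hpl : (j + ab.1 * m + ab.2) %% size Gc < size Gc by rewrite ltn_pmod.
rewrite size_rot nth_rot // hp1 htp ?mem_head // print_cell_eq /=.
set c := if tt ab then num 1 else nth blank Gc (pos ab).
have -> : (if ((if tt ab then num 1 else blank) == blank)
         || (nth blank Gc (pos ab) == blank)
        then Some (if (if tt ab then num 1 else blank) == blank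
            then nth blank Gc (pos ab) else if tt ab then num 1 else blank)
        else None) = Some c.
  by rewrite /c; case E: (tt ab) => //=; rewrite hbl ?mem_head ?eqxx.
rewrite /= set_nth_rot // hp1.
set Gc' := set_nth blank Gc (pos ab) c.
have hs : size Gc' = size Gc by rewrite size_set_nth; lia.
have ne : forall ab', ab' \in L -> pos ab' != pos ab.
  move=> ab' h; apply/eqP => e.
  have e' := inj _ _ (_ : ab' \in ab :: L) (mem_head _ _) e.
  by move: abL; rewrite -e' ?h // inE h orbT.
rewrite IH; first last.
- move=> ab' h t'; rewrite nth_set_nth /= (negbTE (ne _ h)) hbl //.
  by rewrite inE h orbT.
- by move=> ab' h; rewrite htp // inE h orbT.
- by move=> ab' h; rewrite hs; apply: hpos; rewrite inE h orbT.
- by move=> x y hx hy; apply: inj; rewrite inE ?hx ?hy orbT.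
- done.
- by rewrite hs.
rewrite hs; congr (Some (rot k _)); apply: eq_mkseq => q /=.
rewrite nth_set_nth /=.
case: eqP => [->|/eqP ne'].
  have -> : has (fun ab0 => tt ab0 && (pos ab0 == pos ab)) L = false.
    apply/hasP => [[ab' h /andP [_ /eqP e]]].
    by move: (ne _ h); rewrite e eqxx.
  by rewrite eqxx andbT orbF /c; case: (tt ab).
by rewrite eq_sym (negbTE ne') andbF.
Qed.

Set Implicit Arguments.
Unset Strict Implicit.


Lemma dot_grid n dots t : meadows_puzzle n dots -> t < size dots ->
  (nth (0, 0) dots t).1 < n /\ (nth (0, 0) dots t).2 < n.
Proof.
move=> [_ /allP H] ht; have /H/andP [] := mem_nth (0, 0) ht; by [].
Qed.

Lemma sq_bounds n dots sol B : is_solution n dots sol -> B \in sol ->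
  [/\ 0 < sq_size B, sq_row B + sq_size B <= n & sq_col B + sq_size B <= n].
Proof. by move=> [/allP H _ _] /H /andP [/andP [? ?] ?]. Qed.

Lemma two_le (T : eqType) (a b : T) (s : seq T) (p : pred T) :
  a != b -> a \in s -> b \in s -> p a -> p b -> 2 <= count p s.
Proof.
move=> ne ha hb pa pb; rewrite -size_filter.
have -> : 2 = size [:: a; b] by [].
apply: uniq_leq_size; first by rewrite /= inE ne.
by move=> z; rewrite !inE => /orP [/eqP ->|/eqP ->]; rewrite mem_filter ?pa ?pb.
Qed.

Arguments two_le {T a b s p}.

Lemma sq_unique n dots sol c B1 B2 : is_solution n dots sol -> c.1 < n -> c.2 < n ->
  B1 \in sol -> B2 \in sol -> in_square c B1 -> in_square c B2 -> B1 = B2.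
Proof.
move=> [_ H _] h1 h2 i1 i2 c1 c2; apply/eqP; apply: contraT => ne.
have := H c.1 c.2 h1 h2; rewrite -surjective_pairing => e.
by have := two_le ne i1 i2 c1 c2; rewrite e.
Qed.

Lemma B_sol n dots sol t : meadows_puzzle n dots -> is_solution n dots sol -> t < size dots ->
  sol_square dots sol t \in sol /\ in_square (nth (0, 0) dots t) (sol_square dots sol t).
Proof.
move=> Hp [H1 H2 H3] ht; have [d1 d2] := dot_grid Hp ht.
have hh : has (in_square (nth (0, 0) dots t)) sol.
  by rewrite has_count (surjective_pairing (nth (0, 0) dots t)) H2.
split; first by rewrite /sol_square mem_nth // -has_find.
exact: nth_find.
Qed.

Lemma dot_unique n dots sol t t' : meadows_puzzle n dots -> is_solution n dots sol ->
  t < size dots -> t' < size dots ->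
  in_square (nth (0, 0) dots t) (sol_square dots sol t') -> t = t'.
Proof.
move=> Hp Hs ht ht' hin; apply/eqP; apply: contraT => ne.
have [Bin Bd] := B_sol Hp Hs ht'.
case: Hs => _ _ /allP /(_ _ Bin) /eqP e.
have ne' : nth (0, 0) dots t != nth (0, 0) dots t'.
  by rewrite nth_uniq //; case: Hp.
have := @two_le _ _ _ _ (fun d => in_square d (sol_square dots sol t')) ne' (mem_nth _ ht) (mem_nth _ ht') hin Bd.
by rewrite e.
Qed.

Lemma disj n dots sol c t t' : meadows_puzzle n dots -> is_solution n dots sol ->
  c.1 < n -> c.2 < n -> t < size dots -> t' < size dots ->
  in_square c (sol_square dots sol t) -> in_square c (sol_square dots sol t') -> t = t'.
Proof.
move=> Hp Hs h1 h2 ht ht' i1 i2.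
have [B1 d1] := B_sol Hp Hs ht; have [B2 d2] := B_sol Hp Hs ht'.
have e := sq_unique Hs h1 h2 B1 B2 i1 i2.
by apply: (dot_unique Hp Hs ht ht'); rewrite -e.
Qed.

Lemma cover_sq n dots sol r c : meadows_puzzle n dots -> is_solution n dots sol ->
  r < n -> c < n -> exists2 t, t < size dots & in_square (r, c) (sol_square dots sol t).
Proof.
move=> Hp Hs hr hc.
have Hs' := Hs; case: Hs' => _ H2 /allP H3.
have /hasP [B0 B0in inB0] : has (in_square (r, c)) sol by rewrite has_count H2.
have /hasP [d din dB0] : has (fun d => in_square d B0) dots.
  by rewrite has_count (eqP (H3 _ B0in)).
exists (index d dots); first by rewrite index_mem.
have ht : index d dots < size dots by rewrite index_mem.
have [Bt dt] := B_sol Hp Hs ht.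
rewrite nth_index // in dt.
have [d1 d2] := dot_grid Hp ht; rewrite nth_index // in d1 d2.
by rewrite -(sq_unique Hs d1 d2 B0in Bt dB0 dt).
Qed.


Definition gridAfter n dots sol i :=
  mkseq (fun q => if has (fun t => in_square (q %/ n.*2.-1, q %% n.*2.-1) (sol_square dots sol t)) (iota 0 i)
                  then num 1 else blank) (n.*2.-1 * n.*2.-1).

Lemma size_gridAfter n dots sol i : size (gridAfter n dots sol i) = n.*2.-1 * n.*2.-1.
Proof. by rewrite size_mkseq. Qed.

Lemma divmod_cell m r c : c < m -> (r * m + c) %/ m = r /\ (r * m + c) %% m = c.
Proof.
move=> hc; split; first by rewrite divnMDl ?divn_small ?addn0 //; lia.
by rewrite modnMDl modn_small.
Qed.


Lemma cell_lt m r c : r < m -> c < m -> r * m + c < m * m.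
Proof. move=> hr hc; have := leq_mul hr (leqnn m); rewrite mulSn; lia. Qed.

Lemma pos_eq m x y a b : x * m + y + a * m + b = (x + a) * m + (y + b).
Proof. rewrite mulnDl; lia. Qed.

Lemma mkseq_ext (f g : nat -> Defs.card) N : (forall q, q < N -> f q = g q) -> mkseq f N = mkseq g N.
Proof.
move=> H; apply: (@eq_from_nth _ blank); rewrite ?size_mkseq // => q hq.
by rewrite !nth_mkseq // H.
Qed.

Lemma set_nth_same (T : Type) (x0 : T) s k : k < size s -> set_nth x0 s k (nth x0 s k) = s.
Proof.
move=> hk; apply: (@eq_from_nth _ x0); first by rewrite size_set_nth; lia.
by move=> l _; rewrite nth_set_nth /=; case: eqP => [->|].
Qed.

Lemma pairs_mem n ab : ab \in [seq (a, b) | a <- iota 0 n, b <- iota 0 n] -> ab.1 < n /\ ab.2 < n.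
Proof. by case/allpairsP => [[a b] [/= ha hb ->]]; move: ha hb; rewrite !mem_iota /=. Qed.

Lemma hasL_eq n m x y s q : y + s <= n -> x + s <= n -> n <= m ->
  has (fun ab : nat * nat => ((ab.1 < s) && (ab.2 < s)) && (x * m + y + ab.1 * m + ab.2 == q))
      [seq (a, b) | a <- iota 0 n, b <- iota 0 n]
  = (x <= q %/ m < x + s) && (y <= q %% m < y + s).
Proof.
move=> hy hx hm; apply/hasP/andP.
  move=> [[a b] /allpairsP [[a' b'] [/= ha hb [-> ->]]] /andP [/andP [hs1 hs2] /eqP <-]].
  have hb' : y + b' < m by lia.
  rewrite pos_eq; have [-> ->] := divmod_cell (x + a') hb'.
  split; apply/andP; split; lia.
move=> [/andP [h1 h2] /andP [h3 h4]].
exists (q %/ m - x, q %% m - y).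
  apply/allpairsP; exists (q %/ m - x, q %% m - y); rewrite !mem_iota /=; split => //; lia.
apply/andP; split; first by apply/andP; split => /=; lia.
apply/eqP => /=; rewrite !mulnBl.
have := divn_eq q m; have := leq_mul h1 (leqnn m); lia.
Qed.

Lemma ar1 n m y b s : 0 < s -> m = n + n - 1 -> y + s <= n -> b < n -> y + b < m.
Proof. lia. Qed.

Lemma ar2 x a s n : a < s -> x + s <= n -> x + a < n.
Proof. lia. Qed.

Lemma ar3 x a s : a < s -> (x <= x + a < x + s).
Proof. move=> h; apply/andP; split; lia. Qed.

Lemma round_ok n dots sol rnd i : meadows_puzzle n dots -> is_solution n dots sol ->
  i < size dots ->
  meadows_round n dots sol rnd i (gridAfter n dots sol i, templates n)
  = Some (gridAfter n dots sol i.+1, templates n).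
Proof.
move=> Hp Hs hi.
have [d1 d2] := dot_grid Hp hi.
have hn : 0 < n by lia.
have [Bin Bd] := B_sol Hp Hs hi.
set B := sol_square dots sol i in Bin Bd *.
have [hs0 hxs hys] := sq_bounds Hs Bin.
have hm : n <= n.*2.-1 by rewrite -addnn; lia.
have hm' : n.*2.-1 = n + n - 1 by rewrite -addnn; lia.
rewrite /meadows_round; cbv zeta iota.
rewrite -/B.
set m := n.*2.-1 in hm hm' *.
set x := sq_row B in hxs *; set y := sq_col B in hys *; set s := sq_size B in hs0 hxs hys *.
set N := m * m.
have hN : 0 < N by rewrite muln_gt0; lia.
have hidx : x * m + y < N by apply: cell_lt; lia.
have hsG : size (gridAfter n dots sol i) = N by rewrite size_gridAfter.
have hsT : size (templates n) = n by rewrite /templates size_map size_iota.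
rewrite cc_open_eq; last by rewrite hsG.
rewrite hsG cc_open_eq; last by rewrite hsT; lia.
cbv iota.
rewrite !row1_pshift hsT hsG.
set kG := grid_r1 rnd i %% N; set kT := tmpl_r1 rnd i %% n.
have hkG : kG < N by rewrite ltn_pmod.
have hkT : kT < n by rewrite ltn_pmod.
set jT := (s.-1 + n - kT) %% n.
have hjT : (jT + kT) %% n = s.-1.
  have := modA n (s.-1) kT 0 (ltnW hkT); rewrite !addn0 => ->; rewrite modn_small //; lia.
have hjT' : jT < n by rewrite ltn_pmod.
have htp : nth [::] (rot kT (templates n)) jT = template n s.
  rewrite nth_rot ?hsT ?hjT //; last lia.
  rewrite /templates (nth_map 0) ?size_iota ?nth_iota; try lia.
  by congr template; lia.
rewrite htp.
have hT : set_nth [::] (rot kT (templates n)) jT (template n s) = rot kT (templates n).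
  by rewrite -htp set_nth_same // size_rot hsT.
rewrite hT cc_close_eq ?size_rot ?hsT // (rotK kT) eqxx.
set L := [seq (a, b) | a <- iota 0 n, b <- iota 0 n].
have hP : print n (rot kG (gridAfter n dots sol i)) ((x * m + y + N - kG) %% N)
      (template n s) (print_r rnd i) = Some (rot kG (gridAfter n dots sol i.+1)).
  rewrite /print.
  rewrite (@print_fold n m (template n s) (print_r rnd i) _ kG L
            (fun ab => x * m + y + ab.1 * m + ab.2) (fun ab => (ab.1 < s) && (ab.2 < s))).
  - rewrite hsG; congr (Some (rot kG _)); rewrite [in RHS]/gridAfter -/m -/N.
    apply: mkseq_ext => q hq.
    rewrite hasL_eq // /gridAfter nth_mkseq // -/m -[i.+1]addn1 iotaD has_cat /= orbF add0n.
    rewrite /in_square /= -/x -/y -/s.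
    by case: ifP => h; rewrite ?orbT ?orbF.
  - by rewrite hsG ltnW.
  - apply: allpairs_uniq; rewrite ?iota_uniq //.
    by move=> [a b] [c d] _ _ /= [-> ->].
  - move=> [a b] [a' b'] /pairs_mem /= [ha hb] /pairs_mem /= [ha' hb'].
    rewrite /= !pos_eq => e.
    have hb1 : y + b < m by apply: (ar1 hs0 hm' hys hb).
    have hb2 : y + b' < m by apply: (ar1 hs0 hm' hys hb').
    have [e1 e2] := divmod_cell (x + a) hb1.
    have [e3 e4] := divmod_cell (x + a') hb2.
    rewrite e e3 in e1; rewrite e e4 in e2.
    by rewrite (addnI e1) (addnI e2).
  - move=> [a b] /pairs_mem /= [ha hb]; rewrite hsG.
    have hlt : x * m + y + a * m + b < N by rewrite pos_eq; apply: cell_lt; [apply: (ar1 hs0 hm' hxs ha) | apply: (ar1 hs0 hm' hys hb)].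
    split => //.
    rewrite modnDml.
    have := modA N (x * m + y) kG (a * m + b) (ltnW hkG).
    rewrite !addnA => ->; by rewrite modn_small.
  - move=> [a b] /pairs_mem /= [ha hb]; exact: nth_template.
  - move=> [a b] /pairs_mem /= [ha hb] /andP [has hbs].
    have hb1 : y + b < m by apply: (ar1 hs0 hm' hys hb).
    have ha1 : x + a < m by apply: (ar1 hs0 hm' hxs ha).
    rewrite /gridAfter -/m nth_mkseq; last by rewrite pos_eq; apply: cell_lt.
    rewrite pos_eq.
    have [-> ->] := divmod_cell (x + a) hb1.
    case: hasP => // [[t]]; rewrite mem_iota => /andP [_ ht] hin.
    have hinB : in_square (x + a, y + b) B by rewrite /in_square /= -/x -/y -/s !ar3.
    have h1 : (x + a, y + b).1 < n by apply: (ar2 has hxs).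
    have h2 : (x + a, y + b).2 < n by apply: (ar2 hbs hys).
    have h3 : t < size dots by apply: ltn_trans hi.
    have := disj Hp Hs h1 h2 h3 hi hin hinB.
    by move=> e; move: ht; rewrite e ltnn.
rewrite hP; cbv iota beta.
rewrite cc_close_eq ?size_rot ?hsG // -/kG.
have hK : rotr kG (rot kG (gridAfter n dots sol i.+1)) = gridAfter n dots sol i.+1 by apply: rotK.
rewrite hK.
rewrite (_ : all _ _ = true) //.
apply/allP => t; rewrite mem_iota add0n => /andP [_ ht].
have [c1 c2] := dot_grid Hp ht.
have c3 : (nth (0, 0) dots t).2 < m by apply: leq_trans hm.
have c4 : (nth (0, 0) dots t).1 < m by apply: leq_trans hm.
rewrite /gridAfter -/m nth_mkseq; last by apply: cell_lt.
have [-> ->] := divmod_cell (nth (0, 0) dots t).1 c3.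
rewrite -surjective_pairing; apply/eqP.
case hti: (t <= i).
  rewrite ifT //; apply/hasP; exists t; first by rewrite mem_iota.
  exact: (B_sol Hp Hs ht).2.
rewrite ifF //; apply/negbTE/hasP => [[t' ht' hin]].
move: ht'; rewrite mem_iota => /andP [_ ht'].
have ht2 : t' < size dots by apply: leq_trans hi.
have := dot_unique Hp Hs ht ht2 hin.
by move=> e; move: hti; rewrite e -ltnS ht'.
by rewrite size_gridAfter.
Qed.


Lemma fold_ok n dots sol rnd j : meadows_puzzle n dots -> is_solution n dots sol ->
  j <= size dots ->
  foldl (fun acc i => obind (meadows_round n dots sol rnd i) acc)
        (Some (gridAfter n dots sol 0, templates n)) (iota 0 j)
  = Some (gridAfter n dots sol j, templates n).
Proof.
move=> Hp Hs; elim: j => [|j IH] hj //.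
rewrite -addn1 iotaD foldl_cat IH; last by apply: ltnW.
rewrite add0n addn1; exact: (round_ok rnd Hp Hs hj).
Qed.

Theorem lemma4 (n : nat) (dots : seq cell) (sol : seq square) (rnd : shuffles) :
  meadows_puzzle n dots -> is_solution n dots sol ->
  meadows_protocol n dots sol rnd = true.
Proof.
move=> Hp Hs.
rewrite /meadows_protocol eqxx /=.
have -> : nseq (n.*2.-1 * n.*2.-1) blank = gridAfter n dots sol 0.
  apply: (@eq_from_nth _ blank); rewrite ?size_nseq ?size_gridAfter // => q hq.
  by rewrite nth_nseq hq /gridAfter nth_mkseq.
rewrite fold_ok //.
apply/allP => p; rewrite mem_iota add0n => hp.
rewrite /gridAfter nth_mkseq //; apply/eqP.
case: hasP => [[t ht hin]|hno].
  move: ht; rewrite mem_iota add0n => ht.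
  have [Bin _] := B_sol Hp Hs ht.
  have [_ h1 h2] := sq_bounds Hs Bin.
  move: hin; rewrite /in_square /= => /andP [/andP [_ h3] /andP [_ h4]].
  rewrite ifT //; apply/andP; split; [exact: leq_trans h3 h1 | exact: leq_trans h4 h2].
case: ifP => // /andP [h1 h2].
have [t ht hin] := cover_sq Hp Hs h1 h2.
by exfalso; apply: hno; exists t => //; rewrite mem_iota add0n.
Qed.
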